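(* Let $N\geq 3$ and let $|G\rangle=\frac{1}{\sqrt2}(|0\cdots0\rangle+|1\cdots1\rangle)$ be the $N$-qubit GHZ state and $|\psi_+\rangle=\frac1{\sqrt2}(|00\rangle+|11\rangle)$. Let the measurement settings $X_j,X_j'$ ($j=1,\dots,N$) be as in the context, satisfying the non-degeneracy assumptions (ND), and let $A_a,B_b$ ($a,b\in\{0,1\}$) be the associated two-qubit settings defined in the context. Put $$\langle I^N_{CHSH}\rangle=\sum_{a,b\in\{0,1\}}(-1)^{ab}\langle G|\mathbb A_a\otimes\mathbb B_b|G\rangle,\qquad \langle I^2_{CHSH}\rangle=\sum_{a,b\in\{0,1\}}(-1)^{ab}\langle \psi_+|A_a\otimes B_b|\psi_+\rangle.$$ If $\langle I^N_{CHSH}\rangle>2$ then $\langle I^2_{CHSH}\rangle\geq \langle I^N_{CHSH}\rangle$; and if $\langle I^N_{CHSH}\rangle<-2$ then $\langle I^2_{CHSH}\rangle\leq \langle I^N_{CHSH}\rangle$. In particular, violation of the CHSH inequality $|\langle I^2_{CHSH}\rangle|\le 2$ by $|\psi_+\rangle$ is necessary for violation of $|\langle I^N_{CHSH}\rangle|\le 2$ by $|G\rangle$.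
   Context: $\sigma_x,\sigma_y,\sigma_z$ are the Pauli matrices, $\vec\sigma=(\sigma_x,\sigma_y,\sigma_z)$. For $j=1,\dots,N$, single-qubit observables $X_j=\vec n_j\cdot\vec\sigma$, $X_j'=\vec n_j'\cdot\vec\sigma$ with $\vec n_j=(\sin\alpha_j\cos\varphi_j,\sin\alpha_j\sin\varphi_j,\cos\alpha_j)$, $\vec n_j'=(\sin\alpha_j'\cos\varphi_j',\sin\alpha_j'\sin\varphi_j',\cos\alpha_j')$, $\alpha_j,\alpha_j'\in[0,\pi]$, $\varphi_j,\varphi_j'\in\mathbb R$. Define $\mathbb A_0=\bigotimes_{j=1}^{N-1}X_j$, $\mathbb A_1=\bigotimes_{j=1}^{N-1}X_j'$ (acting on qubits $1,\dots,N-1$), $\mathbb B_0=X_N$, $\mathbb B_1=X_N'$ (acting on qubit $N$). Non-degeneracy assumptions (ND): $D:=(\prod_{j=1}^{N-1}\cos\alpha_j)^2+(\prod_{j=1}^{N-1}\sin\alpha_j)^2\neq0$, $D':=(\prod_{j=1}^{N-1}\cos\alpha_j')^2+(\prod_{j=1}^{N-1}\sin\alpha_j')^2\neq0$, and, if $N$ is odd, $\sin\alpha_N\neq0$ and $\sin\alpha_N'\neq0$. Two-qubit settings: with $\varepsilon=D^{-1/2}$, $\varepsilon'=D'^{-1/2}$, let $A_0=\vec{\mathrm n}_0\cdot\vec\sigma$ with $\vec{\mathrm n}_0=\varepsilon\big(\prod_{j=1}^{N-1}\sin\alpha_j\cos\beta,\ \prod_{j=1}^{N-1}\sin\alpha_j\sin\beta,\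 \prod_{j=1}^{N-1}\cos\alpha_j\big)$, $\beta=\sum_{j=1}^{N-1}\varphi_j$, and $A_1$ defined identically from the primed parameters (with $\varepsilon'$, $\beta'=\sum_{j=1}^{N-1}\varphi_j'$). If $N$ is even, $B_0=X_N$, $B_1=X_N'$; if $N$ is odd, $B_0=\cos\varphi_N\sigma_x+\sin\varphi_N\sigma_y$ and $B_1=\cos\varphi_N'\sigma_x+\sin\varphi_N'\sigma_y$. In $\langle\psi_+|A_a\otimes B_b|\psi_+\rangle$, $A_a$ acts on the first and $B_b$ on the second qubit. *)

(* Defs.v *)
From HB Require Import structures.
From mathcomp Require Import all_boot all_order all_algebra.
From mathcomp Require Import reals trigo.
From mathcomp Require Import complex mxtens.
Set Implicit Arguments. Unset Strict Implicit. Unset Printing Implicit Defensive.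
Import Order.TTheory GRing.Theory Num.Theory.
Local Open Scope ring_scope.
Local Open Scope complex_scope.

Fixpoint npow (p n : nat) : nat := match n with O => 1%N | S k => (npow p k * p)%N end.

Section Qubits.
Variable R : realType.
Local Notation C := R[i].

(* n-fold Kronecker product  F 1 ⊗ F 2 ⊗ ... ⊗ F n  (qubit 1 leftmost) *)
Fixpoint ntens {p q : nat} (F : nat -> 'M[C]_(p, q)) (n : nat) : 'M[C]_(npow p n, npow q n) :=
  match n with
  | O => 1%:M
  | S k => ntens F k *t F k.+1
  end.

Fixpoint ntensv (v : nat -> 'cV[C]_2) (n : nat) : 'cV[C]_(npow 2 n) :=
  match n with
  | O => 1%:M
  | S k => ntensv v k *t v k.+1
  end.

Definition sigma_x : 'M[C]_2 := \matrix_(i < 2, j < 2) (if i == j then 0 else 1).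
Definition sigma_y : 'M[C]_2 :=
  \matrix_(i < 2, j < 2)
    (if i == j then 0 else if (i == 0 :> nat) then - 'i else 'i).
Definition sigma_z : 'M[C]_2 :=
  \matrix_(i < 2, j < 2) (if i == j then (if (i == 0 :> nat) then 1 else -1) else 0).

Definition vec_sigma (x y z : R) : 'M[C]_2 :=
  x%:C *: sigma_x + y%:C *: sigma_y + z%:C *: sigma_z.

Definition qubit_obs (a f : R) : 'M[C]_2 :=
  vec_sigma (sin a * cos f) (sin a * sin f) (cos a).

Definition ket0 : 'cV[C]_2 := \col_(i < 2) (if (i == 0 :> nat) then 1 else 0).
Definition ket1 : 'cV[C]_2 := \col_(i < 2) (if (i == 0 :> nat) then 0 else 1).

Definition invsqrt2 : C := (Num.sqrt (2 : R))^-1%:C.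

(* N-qubit GHZ state (|0...0> + |1...1>)/sqrt 2, written with the bipartition
   (qubits 1..N-1) ⊗ (qubit N) *)
Definition GHZ (N : nat) : 'cV[C]_(npow 2 N.-1 * 2) :=
  invsqrt2 *: (ntensv (fun _ => ket0) N.-1 *t ket0 + ntensv (fun _ => ket1) N.-1 *t ket1).

Definition psi_plus : 'cV[C]_(2 * 2) := invsqrt2 *: (ket0 *t ket0 + ket1 *t ket1).

(* expectation value <psi| M |psi> (real part; it is real for Hermitian M) *)
Definition expect {d : nat} (psi : 'cV[C]_d) (M : 'M[C]_d) : R :=
  complex.Re ((((map_mx conjc psi)^T *m M *m psi) 0 0)).

(* multipartite settings  A_a = ⊗_{j=1}^{N-1} X_j (or X_j'),  B_b = X_N (or X_N') *)
Definition bbA (N : nat) (alpha phi : nat -> R) : 'M[C]_(npow 2 N.-1) :=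
  ntens (fun j => qubit_obs (alpha j) (phi j)) N.-1.
Definition bbB (N : nat) (alpha phi : nat -> R) : 'M[C]_2 :=
  qubit_obs (alpha N) (phi N).

Definition prod_sin (N : nat) (alpha : nat -> R) : R := \prod_(1 <= j < N) sin (alpha j).
Definition prod_cos (N : nat) (alpha : nat -> R) : R := \prod_(1 <= j < N) cos (alpha j).
Definition Dnd (N : nat) (alpha : nat -> R) : R :=
  prod_cos N alpha ^+ 2 + prod_sin N alpha ^+ 2.
Definition betasum (N : nat) (phi : nat -> R) : R := \sum_(1 <= j < N) phi j.

Definition A2 (N : nat) (alpha phi : nat -> R) : 'M[C]_2 :=
  let eps := (Num.sqrt (Dnd N alpha))^-1 in
  vec_sigma (eps * (prod_sin N alpha * cos (betasum N phi)))
            (eps * (prod_sin N alpha * sin (betasum N phi)))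
            (eps * prod_cos N alpha).
Definition B2 (N : nat) (alpha phi : nat -> R) : 'M[C]_2 :=
  if odd N then vec_sigma (cos (phi N)) (sin (phi N)) 0
  else qubit_obs (alpha N) (phi N).

Definition chsh {d1 d2 : nat} (psi : 'cV[C]_(d1 * d2))
  (A0 A1 : 'M[C]_d1) (B0 B1 : 'M[C]_d2) : R :=
  expect psi (A0 *t B0) + expect psi (A0 *t B1)
  + expect psi (A1 *t B0) - expect psi (A1 *t B1).

Definition I_N (N : nat) (alpha phi alpha' phi' : nat -> R) : R :=
  chsh (GHZ N) (bbA N alpha phi) (bbA N alpha' phi') (bbB N alpha phi) (bbB N alpha' phi').

Definition I_2 (N : nat) (alpha phi alpha' phi' : nat -> R) : R :=
  chsh psi_plus (A2 N alpha phi) (A2 N alpha' phi') (B2 N alpha phi) (B2 N alpha' phi').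

End Qubits.

(* Main.v *)
Require Import Defs.
From HB Require Import structures.
From mathcomp Require Import all_boot all_order all_algebra.
From mathcomp Require Import reals trigo complex mxtens.
From mathcomp Require Import ring lra.
Import Order.TTheory GRing.Theory Num.Theory.
Set Implicit Arguments. Unset Strict Implicit. Unset Printing Implicit Defensive.
Local Open Scope ring_scope.



Section S1.
Variable R : realType.
Local Notation C := R[i].

Definition bra {d : nat} (u : 'cV[C]_d) : 'rV[C]_d := (map_mx conjc u)^T.
Definition sc {d : nat} (u : 'cV[C]_d) (M : 'M[C]_d) (v : 'cV[C]_d) : C :=
  (bra u *m M *m v) 0 0.

Lemma tens11 (M N : 'M[C]_(1,1)) : (M *t N) 0 0 = M 0 0 * N 0 0.
Proof.
have -> : (0 : 'I_(1*1)) = mxtens_index ((0 : 'I_1), (0 : 'I_1)) by apply: val_inj.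
rewrite tensmxE.
by congr (M _ _ * N _ _); apply: val_inj.
Qed.

Lemma bra_tens m p (u : 'cV[C]_m) (v : 'cV[C]_p) :
  bra (u *t v) = bra u *t bra v.
Proof. by apply/matrixP => i j; rewrite !mxE rmorphM. Qed.

Lemma sc_tens m p (u1 v1 : 'cV[C]_m) (u2 v2 : 'cV[C]_p) A B :
  sc (u1 *t u2) (A *t B) (v1 *t v2) = sc u1 A v1 * sc u2 B v2.
Proof.
rewrite /sc bra_tens.
rewrite [X in X *m _](tensmx_mul (bra u1) (bra u2) A B).
rewrite (tensmx_mul (bra u1 *m A) (bra u2 *m B) v1 v2).
exact: tens11.
Qed.

Lemma scDl d (u v w : 'cV[C]_d) M : sc (u + v) M w = sc u M w + sc v M w.
Proof. by rewrite /sc /bra map_mxD linearD /= !mulmxDl mxE. Qed.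
Lemma scDr d (u v w : 'cV[C]_d) M : sc u M (v + w) = sc u M v + sc u M w.
Proof. by rewrite /sc !mulmxDr mxE. Qed.
Lemma scZl d (u w : 'cV[C]_d) M c : sc (c *: u) M w = conjc c * sc u M w.
Proof. by rewrite /sc /bra map_mxZ linearZ /= -!scalemxAl mxE. Qed.
Lemma scZr d (u w : 'cV[C]_d) M c : sc u M (c *: w) = c * sc u M w.
Proof. by rewrite /sc -!scalemxAr mxE. Qed.

Lemma sc1 : sc (1%:M : 'cV[C]_1) 1%:M 1%:M = 1.
Proof. rewrite /sc !mulmx1 /bra !mxE /=. by rewrite oppr0. Qed.

Lemma sc_ntens (F : nat -> 'M[C]_2) f g n :
  sc (ntensv f n) (ntens F n) (ntensv g n) = \prod_(1 <= j < n.+1) sc (f j) (F j) (g j).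
Proof.
elim: n => [|n IH]; first by rewrite big_geq // sc1.
by rewrite /= sc_tens IH [RHS]big_nat_recr.
Qed.
End S1.



Section S2.
Variable R : realType.
Local Notation C := R[i].
Local Notation Re := (@complex.Re R).
Local Notation Im := (@complex.Im R).

Lemma ceq (x y : C) : Re x = Re y -> Im x = Im y -> x = y.
Proof. by case: x => a b; case: y => c d; rewrite /= => -> ->. Qed.

Lemma cReD (x y : C) : Re (x + y) = Re x + Re y. Proof. by case: x; case: y. Qed.
Lemma cImD (x y : C) : Im (x + y) = Im x + Im y. Proof. by case: x; case: y. Qed.
Lemma cReN (x : C) : Re (- x) = - Re x. Proof. by case: x. Qed.
Lemma cImN (x : C) : Im (- x) = - Im x. Proof. by case: x. Qed.
Lemma cReM (x y : C) : Re (x * y) = Re x * Re y - Im x * Im y. Proof. by case: x; case: y. Qed.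
Lemma cImM (x y : C) : Im (x * y) = Re x * Im y + Im x * Re y. Proof. by case: x => a b; case: y => c d /=; ring. Qed.
Lemma cReC (x : R) : Re (x%:C)%C = x. Proof. by []. Qed.
Lemma cImC (x : R) : Im (x%:C)%C = 0. Proof. by []. Qed.
Lemma cRe1 : Re 1 = 1. Proof. by []. Qed.
Lemma cIm1 : Im 1 = 0. Proof. by []. Qed.
Lemma cRe0 : Re 0 = 0. Proof. by []. Qed.
Lemma cIm0 : Im 0 = 0. Proof. by []. Qed.
Lemma cRei : Re 'i%C = 0. Proof. by []. Qed.
Lemma cImi : Im 'i%C = 1. Proof. by []. Qed.
Lemma cReK (a b : R) : Re (Complex a b) = a. Proof. by []. Qed.
Lemma cImK (a b : R) : Im (Complex a b) = b. Proof. by []. Qed.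

Definition ReIm := (cReD, cImD, cReN, cImN, cReM, cImM, cReC, cImC, cRe1, cIm1, cRe0, cIm0, cRei, cImi, cReK, cImK).

Lemma e01 : ((0 : 'I_2) == 1) = false. Proof. by []. Qed.
Lemma e10 : ((1 : 'I_2) == 0) = false. Proof. by []. Qed.
Lemma e10n : ((1 : 'I_2) == 0 :> nat) = false. Proof. by []. Qed.
Lemma e00n : ((0 : 'I_2) == 0 :> nat) = true. Proof. by []. Qed.
Lemma raw0 : Algebra.hasZero.zero (Algebra.BaseAddUMagma.class R) = 0 :> R. Proof. by []. Qed.
Ltac ifs := rewrite ?eqxx ?e01 ?e10 ?e10n ?e00n.

Lemma vs00 (x y z : R) : vec_sigma x y z 0 0 = (z%:C)%C.
Proof. rewrite /vec_sigma !mxE; ifs; apply: ceq; rewrite !ReIm ?raw0; ring. Qed.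
Lemma vs11 (x y z : R) : vec_sigma x y z 1 1 = ((- z)%:C)%C.
Proof. rewrite /vec_sigma !mxE; ifs; apply: ceq; rewrite !ReIm ?raw0; ring. Qed.
Lemma vs01 (x y z : R) : vec_sigma x y z 0 1 = Complex x (- y).
Proof. rewrite /vec_sigma !mxE; ifs; apply: ceq; rewrite !ReIm ?raw0; ring. Qed.
Lemma vs10 (x y z : R) : vec_sigma x y z 1 0 = Complex x y.
Proof. rewrite /vec_sigma !mxE; ifs; apply: ceq; rewrite !ReIm ?raw0; ring. Qed.

Lemma cj1 : (1 -i* 0)%C = 1 :> C. Proof. by rewrite oppr0. Qed.
Lemma cj0 : ((- 0)*i)%C = 0 :> C. Proof. by rewrite oppr0. Qed.
Lemma lift01 : lift ord0 (ord0 : 'I_1) = 1 :> 'I_2. Proof. by apply: val_inj. Qed.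
Lemma ord00 : ord0 = 0 :> 'I_2. Proof. by apply: val_inj. Qed.
Ltac scket := rewrite /sc /bra !mxE !big_ord_recl !big_ord0 !mxE !big_ord_recl !big_ord0 !mxE /=;
  rewrite ?cj1 ?cj0 ?lift01 ?ord00 !(mulr1, mulr0, mul1r, mul0r, addr0, add0r).

Lemma sc00 (X : 'M[C]_2) : sc (ket0 R) X (ket0 R) = X 0 0. Proof. by scket. Qed.
Lemma sc01 (X : 'M[C]_2) : sc (ket0 R) X (ket1 R) = X 0 1. Proof. by scket. Qed.
Lemma sc10 (X : 'M[C]_2) : sc (ket1 R) X (ket0 R) = X 1 0. Proof. by scket. Qed.
Lemma sc11 (X : 'M[C]_2) : sc (ket1 R) X (ket1 R) = X 1 1. Proof. by scket. Qed.
End S2.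



Section S3.
Variable R : realType.
Local Notation C := R[i].
Local Notation Re := (@complex.Re R).
Local Notation Im := (@complex.Im R).

Lemma sc_pair m p (u0 u1 : 'cV[C]_m) (v0 v1 : 'cV[C]_p) A B (s : R) :
  sc ((s%:C)%C *: (u0 *t v0 + u1 *t v1)) (A *t B) ((s%:C)%C *: (u0 *t v0 + u1 *t v1)) =
  ((s * s)%:C)%C * (sc u0 A u0 * sc v0 B v0 + sc u0 A u1 * sc v0 B v1
     + sc u1 A u0 * sc v1 B v0 + sc u1 A u1 * sc v1 B v1).
Proof.
rewrite scZl scZr !scDl !scDr !sc_tens conjc_real rmorphM /=.
ring.
Qed.

Lemma sc_ntensk (F : nat -> 'M[C]_2) (u v : 'cV[C]_2) n k l :
  (forall X : 'M[C]_2, sc u X v = X k l) ->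
  sc (ntensv (fun _ => u) n) (ntens F n) (ntensv (fun _ => v) n) =
  \prod_(1 <= j < n.+1) F j k l.
Proof. by move=> H; rewrite sc_ntens; apply: eq_bigr => j _. Qed.

Lemma polar n (z : nat -> C) (r t : nat -> R) :
  (forall j, Re (z j) = r j * cos (t j) /\ Im (z j) = r j * sin (t j)) ->
  Re (\prod_(1 <= j < n.+1) z j) = (\prod_(1 <= j < n.+1) r j) * cos (\sum_(1 <= j < n.+1) t j) /\
  Im (\prod_(1 <= j < n.+1) z j) = (\prod_(1 <= j < n.+1) r j) * sin (\sum_(1 <= j < n.+1) t j).
Proof.
move=> H; elim: n => [|n [IH1 IH2]].
  by rewrite !big_geq // cos0 sin0 mulr1 mulr0.
have -> : \prod_(1 <= j < n.+2) z j = (\prod_(1 <= j < n.+1) z j) * z n.+1 by rewrite big_nat_recr.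
have -> : \prod_(1 <= j < n.+2) r j = (\prod_(1 <= j < n.+1) r j) * r n.+1 by rewrite big_nat_recr.
have -> : \sum_(1 <= j < n.+2) t j = (\sum_(1 <= j < n.+1) t j) + t n.+1 by rewrite big_nat_recr.
rewrite cReM cImM IH1 IH2; have [-> ->] := H n.+1.
rewrite cosD sinD; split; ring.
Qed.

Lemma prodN n (x : nat -> R) :
  \prod_(1 <= j < n.+1) (- x j) = (-1) ^+ n * \prod_(1 <= j < n.+1) x j.
Proof.
elim: n => [|n IH]; first by rewrite !big_geq // expr0 mul1r.
have -> : \prod_(1 <= j < n.+2) (- x j) = (\prod_(1 <= j < n.+1) (- x j)) * (- x n.+1) by rewrite big_nat_recr.
have -> : \prod_(1 <= j < n.+2) x j = (\prod_(1 <= j < n.+1) x j) * x n.+1 by rewrite big_nat_recr.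
by rewrite IH exprS; ring.
Qed.

End S3.



Section S4.
Variable R : realType.
Local Notation C := R[i].

Lemma sumr0n n : \sum_(1 <= j < n.+1) (0 : R) = 0.
Proof. by rewrite big1. Qed.

Lemma ghz_expect n (al ph : nat -> R) (bx by' bz : R) :
  expect (GHZ R n.+1) (ntens (fun j => qubit_obs (al j) (ph j)) n *t vec_sigma bx by' bz)
  = (Num.sqrt 2)^-1 * (Num.sqrt 2)^-1 *
    ((\prod_(1 <= j < n.+1) cos (al j)) * bz + (\prod_(1 <= j < n.+1) (- cos (al j))) * (- bz)
     + 2 * ((\prod_(1 <= j < n.+1) sin (al j)) *
           (cos (\sum_(1 <= j < n.+1) ph j) * bx - sin (\sum_(1 <= j < n.+1) ph j) * by'))).
Proof.
have -> : forall d (psi : 'cV[C]_d) M, expect psi M = complex.Re (sc psi M psi) by [].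
rewrite /GHZ /invsqrt2 /= sc_pair.
rewrite !(sc_ntensk _ _ (@sc00 R)) !(sc_ntensk _ _ (@sc01 R)) 
        !(sc_ntensk _ _ (@sc10 R)) !(sc_ntensk _ _ (@sc11 R)).
rewrite sc00 sc01 sc10 sc11 vs00 vs01 vs10 vs11.
have [h00 i00] := @polar R n (fun j => qubit_obs (al j) (ph j) 0 0) (fun j => cos (al j)) (fun _ => 0)
  (fun j => ltac:(rewrite /qubit_obs vs00 /= cos0 sin0 mulr1 mulr0; split=> //)).
have [h11 i11] := @polar R n (fun j => qubit_obs (al j) (ph j) 1 1) (fun j => - cos (al j)) (fun _ => 0)
  (fun j => ltac:(rewrite /qubit_obs vs11 /= cos0 sin0 mulr1 mulr0; split=> //)).
have [h01 i01] := @polar R n (fun j => qubit_obs (al j) (ph j) 0 1) (fun j => sin (al j)) (fun j => - ph j)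
  (fun j => ltac:(rewrite /qubit_obs vs01 /= cosN sinN mulrN; split=> //)).
have [h10 i10] := @polar R n (fun j => qubit_obs (al j) (ph j) 1 0) (fun j => sin (al j)) (fun j => ph j)
  (fun j => ltac:(rewrite /qubit_obs vs10 /=; split=> //)).
rewrite !ReIm h00 i00 h11 i11 h01 i01 h10 i10 sumr0n sumrN cosN sinN cos0 sin0.
ring.
Qed.

Lemma pp_expect (ax ay az bx by' bz : R) :
  expect (psi_plus R) (vec_sigma ax ay az *t vec_sigma bx by' bz)
  = (Num.sqrt 2)^-1 * (Num.sqrt 2)^-1 * (2 * (ax * bx - ay * by' + az * bz)).
Proof.
have -> : forall d (psi : 'cV[C]_d) M, expect psi M = complex.Re (sc psi M psi) by [].
rewrite /psi_plus /invsqrt2 sc_pair.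
rewrite !sc00 !sc01 !sc10 !sc11 !vs00 !vs01 !vs10 !vs11.
rewrite !ReIm. ring.
Qed.
End S4.



Section S5.
Variable R : realType.

Lemma stepL (p q a b : R) : 0 <= p <= 1 -> 0 <= q <= 1 -> -2 <= a <= 2 -> -2 <= b <= 2 ->
  2 < p * a + q * b -> p * a + q * b <= a + b.
Proof.
move=> /andP[p0 p1] /andP[q0 q1] /andP[a0 a1] /andP[b0 b1] h.
have ha : 0 <= a.
  rewrite leNgt; apply/negP => an.
  have : p * a <= 0 by nra.
  have : q * b <= 2 by case: (lerP 0 b) => hb; nra.
  lra.
have hb : 0 <= b.
  rewrite leNgt; apply/negP => bn.
  have : q * b <= 0 by nra.
  have : p * a <= 2 by nra.
  lra.
nra.
Qed.

Lemma keyP (p0 p1 q0 q1 x00 x01 x10 x11 : R) :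
  0 <= p0 <= 1 -> 0 <= p1 <= 1 -> 0 <= q0 <= 1 -> 0 <= q1 <= 1 ->
  -1 <= x00 <= 1 -> -1 <= x01 <= 1 -> -1 <= x10 <= 1 -> -1 <= x11 <= 1 ->
  2 < p0 * q0 * x00 + p0 * q1 * x01 + p1 * q0 * x10 - p1 * q1 * x11 ->
  p0 * q0 * x00 + p0 * q1 * x01 + p1 * q0 * x10 - p1 * q1 * x11 <= x00 + x01 + x10 - x11.
Proof.
move=> hp0 hp1 hq0 hq1 h00 h01 h10 h11 h.
move: (hq0) (hq1) h00 h01 h10 h11 => /andP[a0 a1] /andP[b0 b1] /andP[c0 c1] /andP[d0 d1] /andP[e0 e1] /andP[f0 f1].
have hU : -2 <= q0 * x00 + q1 * x01 <= 2 by apply/andP; split; nra.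
have hV : -2 <= q0 * x10 - q1 * x11 <= 2 by apply/andP; split; nra.
have h1 := stepL hp0 hp1 hU hV.
have e : p0 * q0 * x00 + p0 * q1 * x01 + p1 * q0 * x10 - p1 * q1 * x11 =
   p0 * (q0 * x00 + q1 * x01) + p1 * (q0 * x10 - q1 * x11) by ring.
rewrite e in h *; have h2 := h1 h.
have hP : -2 <= x00 + x10 <= 2 by apply/andP; split; lra.
have hQ : -2 <= x01 - x11 <= 2 by apply/andP; split; lra.
have e2 : q0 * x00 + q1 * x01 + (q0 * x10 - q1 * x11) = q0 * (x00 + x10) + q1 * (x01 - x11) by ring.
have h3 := stepL hq0 hq1 hP hQ.
rewrite e2 in h2; have h4 : 2 < q0 * (x00 + x10) + q1 * (x01 - x11) by lra.
have := h3 h4; lra.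
Qed.

Lemma Dle1 m (al : nat -> R) : Dnd m.+2 al <= 1.
Proof.
rewrite /Dnd /prod_cos /prod_sin; elim: m => [|m IH].
  by rewrite !big_nat1 cos2Dsin2.
have -> : \prod_(1 <= j < m.+3) cos (al j) = (\prod_(1 <= j < m.+2) cos (al j)) * cos (al m.+2) by rewrite big_nat_recr.
have -> : \prod_(1 <= j < m.+3) sin (al j) = (\prod_(1 <= j < m.+2) sin (al j)) * sin (al m.+2) by rewrite big_nat_recr.
have h := cos2Dsin2 (al m.+2).
set c := cos _ in h *; set s := sin _ in h *.
set P := \prod_(_ <= _ < _) _ in IH *; set Q := \prod_(_ <= _ < _) _ in IH *.
have : 0 <= c ^+ 2 by apply: sqr_ge0.
have : 0 <= s ^+ 2 by apply: sqr_ge0.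
have : 0 <= P ^+ 2 by apply: sqr_ge0.
have : 0 <= Q ^+ 2 by apply: sqr_ge0.
rewrite !exprMn; nra.
Qed.
End S5.



Section S6.
Variable R : realType.

Lemma half2 (y : R) : (Num.sqrt 2)^-1 * (Num.sqrt 2)^-1 * (2 * y) = y.
Proof.
have h2 : Num.sqrt (2 : R) ^+ 2 = 2 by rewrite sqr_sqrtr.
have hn : Num.sqrt (2 : R) != 0 by rewrite sqrtr_eq0 -ltNge.
move: h2 hn; set s := Num.sqrt 2 => h2 hn.
rewrite -h2; field; by rewrite ?hn.
Qed.

Lemma hh : (Num.sqrt 2)^-1 * (Num.sqrt 2)^-1 = 2^-1 :> R.
Proof.
have h2 : Num.sqrt (2 : R) ^+ 2 = 2 by rewrite sqr_sqrtr.
have hn : Num.sqrt (2 : R) != 0 by rewrite sqrtr_eq0 -ltNge.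
by rewrite -invfM -expr2 h2.
Qed.

Lemma term n (al ph bl bp : nat -> R) : (1 < n)%N -> Dnd n.+1 al != 0 ->
  expect (GHZ R n.+1) (bbA n.+1 al ph *t bbB n.+1 bl bp) =
   Num.sqrt (Dnd n.+1 al) * (if odd n.+1 then sin (bl n.+1) else 1) *
   expect (psi_plus R) (A2 n.+1 al ph *t B2 n.+1 bl bp)
  /\ (expect (psi_plus R) (A2 n.+1 al ph *t B2 n.+1 bl bp)) ^+ 2 <= 1.
Proof.
move=> hn hD.
have -> : expect (GHZ R n.+1) (bbA n.+1 al ph *t bbB n.+1 bl bp) = _ :=
  ghz_expect n al ph (sin (bl n.+1) * cos (bp n.+1)) (sin (bl n.+1) * sin (bp n.+1)) (cos (bl n.+1)).
rewrite /A2 /B2 prodN -signr_odd.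
move: hD; rewrite /Dnd /prod_cos /prod_sin /betasum.
set Cc := \prod_(1 <= j < n.+1) cos (al j).
set S := \prod_(1 <= j < n.+1) sin (al j).
set b := \sum_(1 <= j < n.+1) ph j.
move=> hD.
set D := Cc ^+ 2 + S ^+ 2.
have D0 : 0 < D by rewrite lt_def hD /D addr_ge0 // sqr_ge0.
have hp2 : Num.sqrt D ^+ 2 = D by rewrite sqr_sqrtr // ltW.
have hp : Num.sqrt D != 0 by rewrite sqrtr_eq0 -ltNge.
have hcb := cos2Dsin2 b.
have hcf := cos2Dsin2 (bp n.+1).
have hca := cos2Dsin2 (bl n.+1).
set cb := cos b in hcb *; set sb := sin b in hcb *.
set cf := cos (bp n.+1) in hcf *; set sf := sin (bp n.+1) in hcf *.
set ca := cos (bl n.+1) in hca *; set sa := sin (bl n.+1) in hca *.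
case: (boolP (odd n.+1)) => ho /=.
- have hon : odd n = false by move: ho => /=; case: (odd n).
  rewrite hon expr0 /= pp_expect !half2 hh.
  set X := cb * cf - sb * sf.
  have hX : X ^+ 2 <= 1.
    have : X ^+ 2 + (sb * cf + cb * sf) ^+ 2 = 1.
      by rewrite /X -(mulr1 1) -{1}hcb -hcf; ring.
    have := sqr_ge0 (sb * cf + cb * sf); lra.
  split; first by field.
  have -> : (Num.sqrt D)^-1 * (S * cb) * cf - (Num.sqrt D)^-1 * (S * sb) * sf + (Num.sqrt D)^-1 * Cc * 0
     = S * X / Num.sqrt D by rewrite /X; field.
  rewrite expr_div_n hp2 ler_pdivrMr // mul1r /D exprMn.
  have := sqr_ge0 S; have := sqr_ge0 Cc; nra.
- have hon : odd n = true by move: ho => /=; case: (odd n).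
  rewrite hon expr1 /qubit_obs pp_expect !half2 hh -/sa -/ca -/cf -/sf.
  set X := cb * cf - sb * sf.
  have hX : X ^+ 2 <= 1.
    have : X ^+ 2 + (sb * cf + cb * sf) ^+ 2 = 1.
      by rewrite /X -(mulr1 1) -{1}hcb -hcf; ring.
    have := sqr_ge0 (sb * cf + cb * sf); lra.
  split; first by rewrite /X; field.
  have -> : (Num.sqrt D)^-1 * (S * cb) * (sa * cf) - (Num.sqrt D)^-1 * (S * sb) * (sa * sf)
      + (Num.sqrt D)^-1 * Cc * ca = (Cc * ca + S * sa * X) / Num.sqrt D by rewrite /X; field.
  rewrite expr_div_n hp2 ler_pdivrMr // mul1r.
  have e1 : (Cc ^+ 2 + S ^+ 2) * (ca ^+ 2 + sa ^+ 2 * X ^+ 2) - (Cc * ca + S * sa * X) ^+ 2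
     = (Cc * sa * X - S * ca) ^+ 2 by ring.
  have e2 : D - (Cc ^+ 2 + S ^+ 2) * (ca ^+ 2 + sa ^+ 2 * X ^+ 2)
     = (Cc ^+ 2 + S ^+ 2) * (sa ^+ 2 * (1 - X ^+ 2)).
    rewrite /D.
    transitivity ((Cc ^+ 2 + S ^+ 2) * (ca ^+ 2 + sa ^+ 2) - (Cc ^+ 2 + S ^+ 2) * (ca ^+ 2 + sa ^+ 2 * X ^+ 2)).
      by rewrite hca mulr1.
    ring.
  have h1 := sqr_ge0 (Cc * sa * X - S * ca).
  have h2 : 0 <= (Cc ^+ 2 + S ^+ 2) * (sa ^+ 2 * (1 - X ^+ 2)).
    apply: mulr_ge0; first by rewrite addr_ge0 // sqr_ge0.
    by apply: mulr_ge0; [rewrite sqr_ge0 | lra].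
  lra.
Qed.
End S6.



Lemma xb (R : realType) (x : R) : x ^+ 2 <= 1 -> -1 <= x <= 1.
Proof. move=> hx; apply/andP; split; nra. Qed.

Lemma pb (R : realType) m (al : nat -> R) : 0 <= Num.sqrt (Dnd m.+2 al) <= 1.
Proof.
rewrite sqrtr_ge0 /=; rewrite -[X in _ <= X]sqrtr1; apply: ler_wsqrtr; exact: Dle1.
Qed.

Lemma qb (R : realType) n (al : nat -> R) : (forall j, (1 <= j <= n.+1)%N -> 0 <= al j <= pi) ->
    0 <= (if odd n.+1 then sin (al n.+1) else 1) <= 1.
Proof.
move=> hal; case: ifP => _; last by rewrite ler01 lexx.
by rewrite sin_ge0_pi ?sin_le1 // hal // leqnn.
Qed.

Lemma final (R : realType) (IN I2 E00 E01 E10 E11 p0 p1 q0 q1 x00 x01 x10 x11 : R) :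
  0 <= p0 <= 1 -> 0 <= p1 <= 1 -> 0 <= q0 <= 1 -> 0 <= q1 <= 1 ->
  -1 <= x00 <= 1 -> -1 <= x01 <= 1 -> -1 <= x10 <= 1 -> -1 <= x11 <= 1 ->
  IN = E00 + E01 + E10 - E11 -> I2 = x00 + x01 + x10 - x11 ->
  E00 = p0 * q0 * x00 -> E01 = p0 * q1 * x01 -> E10 = p1 * q0 * x10 -> E11 = p1 * q1 * x11 ->
  (2 < IN -> IN <= I2) /\ (IN < - 2 -> I2 <= IN).
Proof.
move=> hp0 hp1 hq0 hq1 h00 h01 h10 h11 -> -> -> -> -> ->.
have K := keyP hp0 hp1 hq0 hq1 h00 h01 h10 h11.
have N1 : forall a : R, -1 <= a <= 1 -> -1 <= - a <= 1.
  by move=> a /andP[a0 a1]; apply/andP; split; lra.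
have K' := keyP hp0 hp1 hq0 hq1 (N1 _ h00) (N1 _ h01) (N1 _ h10) (N1 _ h11).
split => h.
- by apply: K.
- have e1 : p0 * q0 * - x00 + p0 * q1 * - x01 + p1 * q0 * - x10 - p1 * q1 * - x11 =
     - (p0 * q0 * x00 + p0 * q1 * x01 + p1 * q0 * x10 - p1 * q1 * x11) by ring.
  rewrite e1 in K'; have := K' ltac:(lra); lra.
Qed.

Theorem theorem1 (R : realType) (N : nat) (alpha phi alpha' phi' : nat -> R) :
  (3 <= N)%N ->
  (forall j, (1 <= j <= N)%N -> 0 <= alpha j <= pi) ->
  (forall j, (1 <= j <= N)%N -> 0 <= alpha' j <= pi) ->
  Dnd N alpha != 0 -> Dnd N alpha' != 0 ->
  (odd N -> sin (alpha N) != 0 /\ sin (alpha' N) != 0) ->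
  (2 < I_N N alpha phi alpha' phi' ->
     I_N N alpha phi alpha' phi' <= I_2 N alpha phi alpha' phi') /\
  (I_N N alpha phi alpha' phi' < - 2 ->
     I_2 N alpha phi alpha' phi' <= I_N N alpha phi alpha' phi').
Proof.
move=> h3 ha ha' hD hD' _.
case: N h3 ha ha' hD hD' => [//|[//|[//|m]]] h3 ha ha' hD hD'.
set n := m.+2 in ha ha' hD hD' *.
have hn : (1 < n)%N by rewrite /n.
have [e00 b00] := @term R n alpha phi alpha phi hn hD.
have [e01 b01] := @term R n alpha phi alpha' phi' hn hD.
have [e10 b10] := @term R n alpha' phi' alpha phi hn hD'.
have [e11 b11] := @term R n alpha' phi' alpha' phi' hn hD'.
have F := final (pb m.+1 alpha) (pb m.+1 alpha') (qb ha) (qb ha') (xb b00) (xb b01) (xb b10) (xb b11)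
  _ _ e00 e01 e10 e11.
by apply: F; reflexivity.
Qed.
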